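(* Let $\sigma\in\mathrm{NC}_n$ and $1\le i<n$. Then $i$ is a noncrossing descent of $\sigma$ if and only if $i$ is the minimal element of its cycle of $\sigma$ and $i+1$ is not the minimal element of its cycle. In particular, for every $\sigma\in\mathrm{NC}_n\setminus\{\mathrm{id}\}$, $\sigma$ has at least one noncrossing descent.
   Context: A set partition of $[n]$ is noncrossing if there are no distinct blocks $P,Q$ with $a,b\in P$, $c,d\in Q$, $a<c<b<d$. To a noncrossing partition associate $\sigma\in S_n$ acting on each block $\{a_1<\dots<a_p\}$ by $\sigma(a_j)=a_{j-1}$ ($j\ge2$), $\sigma(a_1)=a_p$; $\mathrm{NC}_n$ is the set of these permutations, whose cycles (including fixed points) are the blocks. $s_i=(i,i+1)$, $\sigma s_i=\sigma\circ s_i$, $\ell$ is Coxeter length. $i$ is a noncrossing descent of $\sigma\in\mathrm{NC}_n$ if $\sigma s_i\in\mathrm{NC}_n$ and $\ell(\sigma s_i)<\ell(\sigma)$. *)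

(* Defs.v *)
(* Elements of [n] = {1..n} are represented 0-based by 'I_n. *)
From mathcomp Require Import all_boot all_fingroup.
Set Implicit Arguments. Unset Strict Implicit. Unset Printing Implicit Defensive.
Local Open Scope group_scope.

Definition noncrossing (n : nat) (P : {set {set 'I_n}}) : Prop :=
  forall B C, B \in P -> C \in P -> B != C ->
  forall a b c d : 'I_n, a \in B -> b \in B -> c \in C -> d \in C ->
  ~ [/\ (a < c)%N, (c < b)%N & (b < d)%N].

(* For a block B = {a_1 < ... < a_p} and x in B, [block_image B x y] says
   y is the image of x under the cycle: y = a_{j-1} if x = a_j with j >= 2,
   and y = a_p (the maximum of B) if x = a_1 (the minimum of B). *)
Definition block_image (n : nat) (B : {set 'I_n}) (x y : 'I_n) : Prop :=
  y \in B /\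
  if [exists z in B, (z < x)%N]
  then (y < x)%N /\ (forall z, z \in B -> (z < x)%N -> (z <= y)%N)
  else (forall z, z \in B -> (z <= y)%N).

Definition isNC (n : nat) (s : {perm 'I_n}) : Prop :=
  exists P : {set {set 'I_n}},
    [/\ partition P [set: 'I_n], noncrossing P &
        forall B, B \in P -> forall x, x \in B -> block_image B x (s x)].

(* Coxeter length of a permutation of 'I_n = number of inversions. *)
Definition coxlen (n : nat) (s : {perm 'I_n}) : nat :=
  #|[set p : 'I_n * 'I_n | (p.1 < p.2)%N && (s p.2 < s p.1)%N]|.

(* sigma s_i = sigma o s_i, where s_i = (i, i+1) = tperm i j with val j = i+1.
   MathComp's group product is left-to-right ((t * s) x = s (t x)), so
   sigma o s_i is (tperm i j * sigma). *)
Definition mul_s (n : nat) (s : {perm 'I_n}) (i j : 'I_n) : {perm 'I_n} :=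
  tperm i j * s.

(* i is a noncrossing descent (j is the element i+1). *)
Definition nc_descent (n : nat) (s : {perm 'I_n}) (i j : 'I_n) : Prop :=
  isNC (mul_s s i j) /\ (coxlen (mul_s s i j) < coxlen s)%N.

Definition cycle_min (n : nat) (s : {perm 'I_n}) (x : 'I_n) : bool :=
  [forall y in porbit s x, (x <= y)%N].

(* Main.v *)
Require Import Defs.
From mathcomp Require Import all_boot all_fingroup zify.
Set Implicit Arguments. Unset Strict Implicit. Unset Printing Implicit Defensive.

Section NC.
Variables (n : nat) (u : {perm 'I_n}) (P : {set {set 'I_n}}).
Hypothesis partP : partition P [set: 'I_n].
Hypothesis ncP : noncrossing P.
Hypothesis imP : forall B, B \in P -> forall x, x \in B -> block_image B x (u x).

Implicit Types x y z a b c d : 'I_n.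
Local Notation blk := (pblock P).
Lemma tIP : trivIset P. Proof. by case/and3P: partP. Qed.
Lemma covP x : x \in cover P. Proof. by case/and3P: partP => /eqP -> _ _; rewrite inE. Qed.
Lemma blk_in x : x \in blk x. Proof. by rewrite mem_pblock covP. Qed.
Lemma blk_mem x : blk x \in P. Proof. exact: pblock_mem (covP x). Qed.
Lemma blk_eq x y : y \in blk x -> blk y = blk x.
Proof. exact: same_pblock tIP. Qed.
Lemma blk_img x : block_image (blk x) x (u x).
Proof. exact: imP (blk_mem x) x (blk_in x). Qed.
Lemma S1 x : u x \in blk x. Proof. by case: (blk_img x). Qed.
Lemma S2 x z : z \in blk x -> (z < x)%N ->
  (u x < x)%N /\ (forall z, z \in blk x -> (z < x)%N -> (z <= u x)%N).
Proof.
move=> zB zx; case: (blk_img x) => _.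
by have -> : [exists z in blk x, (z < x)%N] by apply/existsP; exists z; rewrite zB.
Qed.
Lemma S3 x : (forall z, z \in blk x -> (x <= z)%N) ->
  forall z, z \in blk x -> (z <= u x)%N.
Proof.
move=> H; case: (blk_img x) => _.
case: ifP => // /existsP [z /andP [zB zx]].
by have := H z zB; rewrite leqNgt zx.
Qed.
Lemma Smin x : (x <= u x)%N <-> (forall z, z \in blk x -> (x <= z)%N).
Proof.
split; last by move=> H; apply: S3 H x (blk_in x).
move=> H z zB; rewrite leqNgt; apply/negP => zx.
by have [+ _] := S2 zB zx; rewrite ltnNge H.
Qed.
Lemma Scross x y a b c d : blk x != blk y -> a \in blk x -> b \in blk x ->
  c \in blk y -> d \in blk y -> (a < c)%N -> (c < b)%N -> (b < d)%N -> False.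
Proof.
move=> ne aB bB cB dB h1 h2 h3.
by apply: (ncP (blk_mem x) (blk_mem y) ne aB bB cB dB).
Qed.
Lemma Sorb x y : y \in porbit u x -> y \in blk x.
Proof.
case/porbitP=> k ->; elim: k => [|k IH]; first by rewrite expg0 perm1 blk_in.
by rewrite expgSr permM -(blk_eq IH) S1.
Qed.
Lemma Scm x : cycle_min u x = (x <= u x)%N.
Proof.
apply/forall_inP/idP => [H | /Smin H y /Sorb]; last exact: H.
by apply: H; rewrite -[u x]/((u ^+ 1)%g x) mem_porbit.
Qed.
End NC.
Lemma tperm_ord n (i j x y : 'I_n) : val j = (val i).+1 ->
  ((x, y) != (i, j)) && (x < y)%N =
  ((x, y) != (j, i)) && (tperm i j x < tperm i j y)%N.
Proof.
move=> hj.
have ev : forall a b : 'I_n, (a == b) = (val a == val b) by [].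
have tv : forall z : 'I_n, val (tperm i j z) =
   if val z == val i then val j else if val z == val j then val i else val z.
  move=> z; case: tpermP => [->|->|a b]; rewrite ?eqxx //=.
  - by rewrite hj; case: ifP => /eqP; lia.
  - case: ifP => [/eqP/val_inj E|_]; first by case: a.
    by case: ifP => [/eqP/val_inj E|_] //; case: b.
rewrite !xpair_eqE !ev !tv.
case: (val x =P val i); case: (val x =P val j); case: (val y =P val i); case: (val y =P val j);
 rewrite /= => *; have hj2 : nat_of_ord j = (nat_of_ord i).+1 := hj; apply/idP/idP; lia.
Qed.

Lemma coxlen_mul n (s : {perm 'I_n}) (i j : 'I_n) : val j = (val i).+1 ->
  (coxlen (mul_s s i j) < coxlen s)%N = (s j < s i)%N.
Proof.
move=> hj.
set t := mul_s s i j.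
have tE z : t z = s (tperm i j z) by rewrite /t /mul_s permM.
pose f (p : 'I_n * 'I_n) := (tperm i j p.1, tperm i j p.2).
have finj : injective f.
  by move=> [a b] [c d] [/perm_inj -> /perm_inj ->].
pose A (u : {perm 'I_n}) := [set p : 'I_n * 'I_n | (p.1 < p.2)%N && (u p.2 < u p.1)%N].
have E : A s :\ (i, j) = f @^-1: (A t :\ (i, j)).
  apply/setP => [[x y]]; rewrite !inE /=.
  have -> : (f (x, y) != (i, j)) = ((x, y) != (j, i)).
    rewrite /f /= !xpair_eqE.
    have h1 z w : (tperm i j z == w) = (z == tperm i j w).
      by rewrite -(inj_eq (@perm_inj _ (tperm i j))) tpermK.
    by rewrite !h1 tpermL tpermR.
  rewrite !tE !tpermK.
  by rewrite andbA tperm_ord // -andbA.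
have cs : coxlen s = ((i, j) \in A s) + #|A s :\ (i, j)| by rewrite /coxlen -cardsD1.
have ct : coxlen t = ((i, j) \in A t) + #|A s :\ (i, j)|.
  by rewrite E card_preimset // /coxlen -cardsD1.
rewrite cs ct ltn_add2r !inE /= !tE tpermL tpermR.
have ij : (i < j)%N by rewrite hj.
rewrite ij /=.
have nij : s i != s j by rewrite (inj_eq perm_inj); apply/eqP => e; move: ij; rewrite e ltnn.
case: (ltngtP (s j) (s i)) => h; rewrite ?h //=.
Qed.

Lemma desc_fwd n (s : {perm 'I_n}) (i j : 'I_n) : val j = (val i).+1 ->
  isNC (mul_s s i j) -> (s j < s i)%N -> (i <= s i)%N /\ (s j < j)%N.
Proof.
move=> hj [Q [pQ nQ iQ]] lt.
set t := mul_s s i j.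
have tE z : t z = s (tperm i j z) by rewrite /t /mul_s permM.
have ti : t i = s j by rewrite tE tpermL.
have tj : t j = s i by rewrite tE tpermR.
have ij : (i < j)%N by rewrite hj.
have hj2 : nat_of_ord j = (nat_of_ord i).+1 := hj.
split.
  case: (leqP i (s i)) => // ha; exfalso.
  have ne : pblock Q i != pblock Q j.
    apply/eqP => e; have iin : i \in pblock Q j by rewrite -e blk_in.
    have [_ H] := S2 pQ iQ iin ij.
    by have := H i iin ij; rewrite tj; lia.
  have a1 := S1 pQ iQ i; have a2 := S1 pQ iQ j; rewrite ti in a1; rewrite tj in a2.
  by apply: (Scross pQ nQ ne a1 (blk_in pQ i) a2 (blk_in pQ j)); lia.
case: (ltnP (s j) j) => // hb; exfalso.
have jt : (j <= t j)%N by rewrite tj; lia.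
have /(Smin pQ iQ) H := jt.
have ne : pblock Q i != pblock Q j.
  apply/eqP => e; have iin : i \in pblock Q j by rewrite -e blk_in.
  by have := H i iin; lia.
have a1 := S1 pQ iQ i; have a2 := S1 pQ iQ j; rewrite ti in a1; rewrite tj in a2.
case: (eqVneq (s j) j) => e.
  rewrite e in a1; move: ne; by rewrite (blk_eq pQ a1) eqxx.
have e2 : nat_of_ord (s j) <> nat_of_ord j by move=> /val_inj; apply/eqP.
by apply: (Scross pQ nQ ne (blk_in pQ i) a1 (blk_in pQ j) a2); lia.
Qed.

Lemma mkNC n (t : {perm 'I_n}) (bl : 'I_n -> {set 'I_n}) :
  (forall x, x \in bl x) ->
  (forall x y, y \in bl x -> bl y = bl x) ->
  (forall x y a b c d, bl x != bl y -> a \in bl x -> b \in bl x ->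
     c \in bl y -> d \in bl y -> (a < c)%N -> (c < b)%N -> (b < d)%N -> False) ->
  (forall x, block_image (bl x) x (t x)) -> isNC t.
Proof.
move=> h1 h2 h3 h4; exists (bl @: [set: 'I_n]); split.
- apply/and3P; split.
  + apply/eqP/setP => x; rewrite inE; apply/bigcupP; exists (bl x) => //.
    by apply/imsetP; exists x.
  + apply/trivIsetP => A B /imsetP[x _ ->] /imsetP[y _ ->] ne.
    apply/pred0P => z /=; apply/negbTE/negP => /andP[zx zy].
    by move: ne; rewrite -(h2 _ _ zx) -(h2 _ _ zy) eqxx.
  + by apply/imsetP => [[x _ e]]; have := h1 x; rewrite -e inE.
- move=> B C /imsetP[x _ ->] /imsetP[y _ ->] ne a b c d ha hb hc hd [l1 l2 l3].
  exact: (h3 x y a b c d).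
- by move=> B /imsetP[y _ ->] x xy; rewrite -(h2 _ _ xy).
Qed.

Section Bwd.
Variables (n : nat) (s : {perm 'I_n}) (i j : 'I_n) (P : {set {set 'I_n}}).
Hypothesis hj : val j = (val i).+1.
Hypothesis partP : partition P [set: 'I_n].
Hypothesis ncP : noncrossing P.
Hypothesis imP : forall B, B \in P -> forall x, x \in B -> block_image B x (s x).
Hypothesis hi : (i <= s i)%N.
Hypothesis hsj : (s j < j)%N.
Local Notation B := (pblock P).
Local Notation t := (mul_s s i j).

Lemma tE z : t z = s (tperm i j z). Proof. by rewrite /mul_s permM. Qed.
Lemma ti : t i = s j. Proof. by rewrite tE tpermL. Qed.
Lemma tj : t j = s i. Proof. by rewrite tE tpermR. Qed.
Lemma tx x : x != i -> x != j -> t x = s x.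
Proof. by move=> a b; rewrite tE tpermD // eq_sym. Qed.
Lemma hj2 : nat_of_ord j = (nat_of_ord i).+1. Proof. exact: hj. Qed.
Lemma neqv (a b : 'I_n) : a != b -> nat_of_ord a <> nat_of_ord b.
Proof. by move=> /eqP h /val_inj. Qed.
Lemma eqv (a b : 'I_n) : nat_of_ord a = nat_of_ord b -> a = b.
Proof. exact: val_inj. Qed.
Lemma imin : forall z, z \in B i -> (i <= z)%N.
Proof. exact/(Smin partP imP). Qed.

Lemma caseA : i \in B j -> isNC t.
Proof.
move=> iBj; have hj' := hj2.
have Bij : B i = B j by apply: blk_eq.
have sji : s j = i.
  have [_ H] := S2 partP imP iBj (ltac:(rewrite hj2; lia)).
  by have := H i iBj (ltac:(rewrite hj2; lia)); move=> h; apply: eqv; lia.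
have ij : i != j by apply/eqP => e; move: hsj; rewrite -e; lia.
have sii : s i != i by rewrite -{2}sji (inj_eq perm_inj).
pose bl x := if x == i then [set i] else B x :\ i.
apply: (@mkNC _ _ bl).
- move=> x; rewrite /bl; case: (eqVneq x i) => [->|ne]; rewrite !inE ?eqxx // ne blk_in //.
- move=> x y; rewrite /bl; case: (eqVneq x i) => [xi | nx]; first by rewrite inE => /eqP ->; rewrite eqxx.
  rewrite !inE => /andP[ny yB]; rewrite (negbTE ny); by rewrite (blk_eq partP yB).
- have sub x : bl x \subset B x.
    rewrite /bl; case: eqP => [->|_]; last exact: subsetDl.
    by rewrite sub1set blk_in.
  move=> x y a b c d ne ha hb hc hd l1 l2 l3.
  case: (eqVneq (B x) (B y)) => [e|ne'].
    move: ne ha hb hc hd; rewrite /bl.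
    case: (eqVneq x i) => [xi|nx]; case: (eqVneq y i) => [yi|ny]; rewrite ?eqxx // !inE.
    + by move=> _ /eqP ea /eqP eb; rewrite ea eb in l1 l2; lia.
    + by move=> _ _ _ /eqP ec /eqP ed; rewrite ec ed in l2 l3; lia.
    + by rewrite e eqxx.
  apply: (Scross partP ncP ne' (subsetP (sub x) _ ha) (subsetP (sub x) _ hb)
       (subsetP (sub y) _ hc) (subsetP (sub y) _ hd)) => //.
- move=> x; rewrite /bl /block_image.
  case: (eqVneq x i) => [->|nx].
    rewrite ti sji inE eqxx; split => //.
    have -> : [exists z in [set i], (z < i)%N] = false.
      by apply/existsP => [[z /andP[/set1P -> ]]]; rewrite ltnn.
    by move=> z /set1P ->.
  case: (eqVneq x j) => [->|nxj].
    rewrite tj !inE sii /= -Bij S1 //; split => //.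
    have -> : [exists z in B i :\ i, (z < j)%N] = false.
      apply/existsP => [[z /andP[]]]; rewrite !inE => /andP[/neqv zi /imin zb].
      by rewrite hj2; lia.
    move=> z; rewrite !inE => /andP[_ zb].
    by apply: (S3 partP imP) zb; exact: imin.
  rewrite tx // !inE.
  have sxi : s x != i by rewrite -sji (inj_eq perm_inj).
  rewrite sxi S1 //; split => //.
  case: (leqP x (s x)) => h.
    have /(Smin partP imP) H := h.
    have -> : [exists z in B x :\ i, (z < x)%N] = false.
      apply/existsP => [[z /andP[]]]; rewrite !inE => /andP[_ /H]; lia.
    move=> z; rewrite !inE => /andP[_ zb]; exact: (S3 partP imP) zb.
  have -> : [exists z in B x :\ i, (z < x)%N].
    by apply/existsP; exists (s x); rewrite !inE sxi S1 //.
  have [h1 h2] := S2 partP imP (S1 partP imP x) h.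
  split => // z; rewrite !inE => /andP[_]; exact: h2.
Qed.

Lemma caseB : i \notin B j -> isNC t.
Proof.
move=> iBj; have hj' := hj2.
have ij : i != j by apply/eqP => e; move: iBj; rewrite e blk_in.
have nBij : B j != B i by apply/eqP => e; move: iBj; rewrite e blk_in.
have sjC := S1 partP imP j.
have sji : (s j < i)%N.
  have : s j != i by apply/eqP => e; move: iBj; rewrite -e sjC.
  by move/neqv; lia.
have Bi1 : forall z, z \in B i -> z = i.
  move=> z zB; apply/eqP; apply/negP => /negP/neqv zi.
  have l1 := imin zB.
  have zj : z != j.
    by apply/eqP => e; move: nBij; rewrite -e (blk_eq partP zB) eqxx.
  move/neqv: zj => zj.
  by apply: (Scross partP ncP nBij sjC (blk_in partP j) (blk_in partP i) zB); lia.
have sii : s i = i by apply: Bi1; exact: S1.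
have outC : forall x z, x \notin B j -> z \in B x -> z \notin B j.
  move=> x z xC zB; apply/negP => zC; move: xC.
  by rewrite -(blk_eq partP zC) (blk_eq partP zB) blk_in.
have outi : forall x z, x != i -> z \in B x -> z != i.
  move=> x z xi zB; apply/eqP => e; move: zB; rewrite e => iB.
  by move: xi; rewrite (Bi1 x) ?eqxx // (blk_eq partP iB) blk_in.
pose bl x := if (x == i) || (x \in B j) then i |: B j else B x.
apply: (@mkNC _ _ bl).
- move=> x; rewrite /bl; case: (eqVneq x i) => [->|ne]; rewrite /= ?inE ?eqxx //.
  by case: ifP => h; rewrite ?inE ?h ?orbT ?blk_in.
- move=> x y; rewrite /bl; case: ifP => cx.
    by rewrite !inE => ->.
  move=> yB; move/negbT: cx; rewrite negb_or => /andP[xi xC].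
  rewrite (negbTE (outi _ _ xi yB)) (negbTE (outC _ _ xC yB)) /=.
  exact: blk_eq.
- move=> x y a b c d; rewrite /bl.
  case: ifP => cx; case: ifP => cy; rewrite ?eqxx //.
  + move: cy; move/negbT; rewrite negb_or => /andP[yi yC].
    move=> ne; rewrite !inE => ha hb hc hd l1 l2 l3.
    have ne' : B j != B y by apply/eqP => e; move: yC; rewrite e blk_in.
    have dC := outC _ _ yC hd.
    have dj : d != j by apply/eqP => e; move: dC; rewrite e blk_in.
    move/neqv: dj => dj.
    case/orP: ha => [/eqP ea|ha]; case/orP: hb => [/eqP eb|hb].
    * by rewrite ea eb in l1 l2; clear -l1 l2; lia.
    * rewrite ea in l1.
      by apply: (Scross partP ncP ne' sjC hb hc hd); clear -l1 l2 l3 sji; lia.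
    * rewrite eb in l2 l3.
      by apply: (Scross partP ncP ne' ha (blk_in partP j) hc hd); clear -l1 l2 l3 hj' dj; lia.
    * by apply: (Scross partP ncP ne' ha hb hc hd).
  + move: cx; move/negbT; rewrite negb_or => /andP[xi xC].
    move=> ne; rewrite !inE => ha hb hc hd l1 l2 l3.
    have ne' : B x != B j by apply/eqP => e; move: xC; rewrite -e blk_in.
    have bC := outC _ _ xC hb.
    have bj : b != j by apply/eqP => e; move: bC; rewrite e blk_in.
    move/neqv: bj => bj.
    case/orP: hc => [/eqP ec|hc]; case/orP: hd => [/eqP ed|hd].
    * by rewrite ec ed in l2 l3; clear -l2 l3; lia.
    * rewrite ec in l1 l2.
      by apply: (Scross partP ncP ne' ha hb (blk_in partP j) hd); clear -l1 l2 l3 hj' bj; lia.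
    * rewrite ed in l3.
      by apply: (Scross partP ncP ne' ha hb hc (blk_in partP j)); clear -l1 l2 l3 hj'; lia.
    * by apply: (Scross partP ncP ne' ha hb hc hd).
  + move=> ne ha hb hc hd; exact: (Scross partP ncP ne ha hb hc hd).
- move=> x; rewrite /bl /block_image.
  case: (eqVneq x i) => [->|nx] /=.
    rewrite ti !inE sjC orbT; split => //.
    have -> : [exists z in i |: B j, (z < i)%N].
      by apply/existsP; exists (s j); rewrite !inE sjC orbT.
    split => // z; rewrite !inE => /orP[/eqP -> | zC] zl; first by clear -zl; lia.
    have [_ H] := S2 partP imP sjC hsj.
    by apply: H zC _; clear -zl hj'; lia.
  case: ifP => xC.
    case: (eqVneq x j) => [->|nxj].
      rewrite tj sii !inE eqxx /=; split => //.
      have ilj : (i < j)%N by clear -hj'; lia.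
      have -> : [exists z in i |: B j, (z < j)%N].
        by apply/existsP; exists i; rewrite !inE eqxx /=.
      split => //.
      move=> z; rewrite !inE => /orP[/eqP -> | zC] zl; first by [].
      have [_ H] := S2 partP imP sjC hsj.
      by have := H z zC zl => h; clear -h sji; lia.
    rewrite tx // !inE.
    have BxC : B x = B j by apply: blk_eq.
    have sxC : s x \in B j by rewrite -BxC S1.
    rewrite sxC orbT; split => //.
    move/neqv: nx => nx'; move/neqv: nxj => nxj'.
    case: (leqP x (s x)) => h.
      have /(Smin partP imP) H := h.
      rewrite BxC in H.
      have xj := H j (blk_in partP j).
      have xi' : (x < i)%N by clear -xj nx' nxj' hj'; lia.
      have -> : [exists z in i |: B j, (z < x)%N] = false.
        apply/existsP => [[z /andP[]]]; rewrite !inE.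
        by move=> /orP[/eqP -> zl | /H zx zl]; [clear -xi' zl; lia | clear -zx zl; lia].
      have H3 : forall z, z \in B j -> (z <= s x)%N.
        by move=> z; rewrite -BxC; apply: (S3 partP imP); rewrite BxC.
      have sxj := H3 j (blk_in partP j).
      move=> z; rewrite !inE => /orP[/eqP -> | /H3] //; clear -sxj hj'; lia.
    have -> : [exists z in i |: B j, (z < x)%N].
      by apply/existsP; exists (s x); rewrite !inE sxC orbT.
    have [h1 h2] := S2 partP imP (S1 partP imP x) h.
    rewrite BxC in h2.
    split => // z; rewrite !inE => /orP[/eqP -> | zC] zl; last exact: h2.
    have jx : (j < x)%N by clear -zl nxj' hj'; lia.
    by have := h2 j (blk_in partP j) jx; clear -hj'; lia.
  have nxj : x != j by apply/eqP => e; move: xC; rewrite e blk_in.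
  rewrite tx //; exact: blk_img.
Qed.
End Bwd.


Theorem proposition7p7 (n : nat) (s : {perm 'I_n}) :
  isNC s ->
  (forall i j : 'I_n, val j = (val i).+1 ->
     (nc_descent s i j <-> (cycle_min s i /\ ~~ cycle_min s j))) /\
  (s != 1%g -> exists i j : 'I_n, val j = (val i).+1 /\ nc_descent s i j).
Proof.
move=> NC; case: (NC) => P [pP nP iP].
have cm x : cycle_min s x = (x <= s x)%N := Scm pP iP x.
have key : forall i j : 'I_n, val j = (val i).+1 ->
    (nc_descent s i j <-> ((i <= s i)%N /\ (s j < j)%N)).
  move=> i j hj; split.
  - by case=> nct lt; rewrite coxlen_mul // in lt; exact: desc_fwd.
  - case=> h1 h2; split.
    + case: (boolP (i \in pblock P j)) => h.
        exact: (caseA hj pP nP iP h1 h2 h).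
      exact: (caseB hj pP nP iP h1 h2 h).
    + rewrite coxlen_mul //.
      have ne : s j != s i.
        rewrite (inj_eq perm_inj); apply/eqP => e; move: hj; rewrite e; lia.
      move/neqv: ne => ne.
      have hj2 : nat_of_ord j = (nat_of_ord i).+1 := hj.
      clear -ne hj2 h1 h2; lia.
split.
  by move=> i j hj; rewrite key // !cm -ltnNge.
move=> ns.
have [x lx] : exists x : 'I_n, (s x < x)%N.
  case: (pickP (fun y => s y != y)) => [y hy | h]; last first.
    exfalso; move/negP: ns; apply; apply/eqP/permP => y; rewrite perm1.
    by apply/eqP; move: (h y) => /negbFE.
  case: (ltnP (s y) y) => hl; first by exists y.
  have yy : (y < s y)%N.
    move/neqv: hy => hy; clear -hy hl; lia.
  have sy := S1 pP iP y.
  have ysy : y \in pblock P (s y) by rewrite (blk_eq pP sy) blk_in.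
  have [h _] := S2 pP iP ysy yy.
  by exists (s y).
pose pr m := [exists x : 'I_n, (nat_of_ord x == m) && (s x < x)%N].
have prx : exists m, pr m by exists (nat_of_ord x); apply/existsP; exists x; rewrite eqxx lx.
case: (ex_minnP prx) => m /existsP[y /andP[/eqP ym ly]] minm.
have ilt : (y.-1 < n)%N by have := ltn_ord y; lia.
pose i := Ordinal ilt.
have hj : val y = (val i).+1 by rewrite /= ; lia.
exists i, y; split => //; apply/key => //; split => //.
case: (leqP i (s i)) => // hi; exfalso.
have pri : pr i by apply/existsP; exists i; rewrite eqxx hi.
have hj2 : nat_of_ord y = (nat_of_ord i).+1 := hj.
have := minm _ pri; rewrite -ym; clear -hj2; lia.
Qed.
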